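(* Let $h:\mathbb{R}^n\to\mathbb{R}^m$ be positively homogeneous. Suppose that: (i) for every $w\in\mathbb{R}^m$ the scalar function $\langle w,h\rangle$ belongs to $\mathrm{DCH}(\mathbb{R}^n)$; (ii) $h$ satisfies condition (C) around $0$; (iii) $\flat_0(h):=\operatorname{dist}\big(0,D^{\star}h(0)(S_m)\big)>0$, where $S_m$ is the unit sphere of $\mathbb{R}^m$. Then $h$ is linearly open around $0$ and $\operatorname{lop}(h,0)\ge\flat_0(h)$.
   Context: $\mathrm{Sub}(\mathbb{R}^n)$ is the cone of sublinear (positively homogeneous and convex, real-valued) functions on $\mathbb{R}^n$, and $\mathrm{DCH}(\mathbb{R}^n)=\mathrm{Sub}(\mathbb{R}^n)-\mathrm{Sub}(\mathbb{R}^n)$. $\mathcal{C}(\mathbb{R}^n)$ is the family of nonempty convex compact subsets of $\mathbb{R}^n$. For $A,B$ convex compact or empty, the star-difference (Pontryagin difference) is $A\stackrel{*}{-}B=\{x\in\mathbb{R}^n: x+B\subseteq A\}$. A mapping $g:\mathbb{R}^n\to\mathbb{R}^m$ is scalarly quasidifferentiable at $x$ if for every $w\in\mathbb{R}^m$ the function $\langle w,g\rangle$ is directionally differentiable at $x$ in every direction $v$ and there exist $p_w,q_w\in\mathrm{Sub}(\mathbb{R}^n)$ with $\langle w,g\rangle'(x;v)=p_w(v)-q_w(v)$ for all $v\in\mathbb{R}^n$. The star-coquasiderivative of $g$ at $x$ is the set-valued map $D^{\star}g(x):\mathbb{R}^m\rightrightarrows\mathbb{R}^n$, $D^{\star}g(x)(w)=\partial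 p_w(0)\stackrel{*}{-}\partial q_w(0)$ (where $\partial$ is the convex subdifferential); this set does not depend on the choice of the representing pair $(p_w,q_w)$. For $A\subseteq\mathbb{R}^m$, $D^{\star}g(x)(A)=\bigcup_{w\in A}D^{\star}g(x)(w)$. A mapping $g$ scalarly quasidifferentiable on a neighbourhood $U$ of $\bar x$ satisfies condition (C) around $\bar x$ if the set-valued map $x\mapsto D^{\star}g(x)(S_m)$ is upper semicontinuous at $\bar x$: for every open $O\supseteq D^{\star}g(\bar x)(S_m)$ there is $\delta>0$ with $D^{\star}g(x)(S_m)\subseteq O$ for all $x$ with $\|x-\bar x\|\le\delta$. $\operatorname{dist}(0,\emptyset)=+\infty$. $h$ is linearly open around $\bar x$ if there exist $\alpha>0$ and neighbourhoods $U$ of $\bar x$, $V$ of $h(\bar x)$ with $B^\circ(h(x),\alpha r)\cap V\subseteq h(B^\circ(x,r))$ for all $x\in U$, $r>0$ ($B^\circ$ the open ball); $\operatorname{lop}(h,\bar x)$ is the supremum of such $\alpha$. *)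

(* Defs.v *)
From HB Require Import structures.
From mathcomp Require Import all_boot all_order all_algebra.
From mathcomp Require Import all_classical all_reals all_analysis.
Set Implicit Arguments. Unset Strict Implicit. Unset Printing Implicit Defensive.
Import Order.TTheory GRing.Theory Num.Theory.
Import numFieldNormedType.Exports.
Local Open Scope classical_set_scope.
Local Open Scope ring_scope.

Section Defs.
Variable R : realType.

Definition dotp (n : nat) (x y : 'rV[R]_n) : R := \sum_(i < n) x 0 i * y 0 i.
Definition enorm (n : nat) (x : 'rV[R]_n) : R := Num.sqrt (dotp x x).

Definition sphere (m : nat) : set 'rV[R]_m := [set w | enorm w = 1].

Definition pos_homogeneous (n m : nat) (h : 'rV[R]_n -> 'rV[R]_m) :=
  forall (t : R) (x : 'rV[R]_n), 0 < t -> h (t *: x) = t *: h x.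

Definition sublinear (n : nat) (p : 'rV[R]_n -> R) :=
  (forall (t : R) (x : 'rV[R]_n), 0 < t -> p (t *: x) = t * p x) /\
  (forall (x y : 'rV[R]_n) (l : R), 0 <= l -> l <= 1 ->
     p (l *: x + (1 - l) *: y) <= l * p x + (1 - l) * p y).

Definition DCH (n : nat) (f : 'rV[R]_n -> R) :=
  exists p q : 'rV[R]_n -> R, sublinear p /\ sublinear q /\ forall x, f x = p x - q x.

Definition subdiff (n : nat) (f : 'rV[R]_n -> R) (x : 'rV[R]_n) : set 'rV[R]_n :=
  [set s | forall y, f x + dotp s (y - x) <= f y].

Definition stardiff (n : nat) (A B : set 'rV[R]_n) : set 'rV[R]_n :=
  [set x | forall b, B b -> A (x + b)].

Definition dirder (n : nat) (f : 'rV[R]_n -> R) (x v : 'rV[R]_n) (d : R) :=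
  (fun t : R => (f (x + t *: v) - f x) / t) @ (0 : R)^'+ --> d.

Definition scal (n m : nat) (w : 'rV[R]_m) (g : 'rV[R]_n -> 'rV[R]_m) :=
  fun y : 'rV[R]_n => dotp w (g y).

Definition qd_pair (n m : nat) (g : 'rV[R]_n -> 'rV[R]_m) (x : 'rV[R]_n)
  (w : 'rV[R]_m) (p q : 'rV[R]_n -> R) :=
  sublinear p /\ sublinear q /\ forall v, dirder (scal w g) x v (p v - q v).

Definition scal_quasidiff (n m : nat) (g : 'rV[R]_n -> 'rV[R]_m) (x : 'rV[R]_n) :=
  forall w : 'rV[R]_m, exists p q, qd_pair g x w p q.

(* star-coquasiderivative D* g(x)(w) = dp_w(0) *- dq_w(0); the set does not
   depend on the representing pair, so we take the union over all pairs *)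
Definition Dstar (n m : nat) (g : 'rV[R]_n -> 'rV[R]_m) (x : 'rV[R]_n)
  (w : 'rV[R]_m) : set 'rV[R]_n :=
  [set s | exists p q, qd_pair g x w p q /\
           stardiff (subdiff p 0) (subdiff q 0) s].

Definition Dstar_set (n m : nat) (g : 'rV[R]_n -> 'rV[R]_m) (x : 'rV[R]_n)
  (A : set 'rV[R]_m) : set 'rV[R]_n :=
  [set s | exists2 w, A w & Dstar g x w s].

Definition condC (n m : nat) (g : 'rV[R]_n -> 'rV[R]_m) (xbar : 'rV[R]_n) :=
  (exists U : set 'rV[R]_n, nbhs xbar U /\ forall x, U x -> scal_quasidiff g x) /\
  (forall O : set 'rV[R]_n, open O -> Dstar_set g xbar (@sphere m) `<=` O ->
     exists2 delta : R, 0 < delta &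
       forall x, enorm (x - xbar) <= delta -> Dstar_set g x (@sphere m) `<=` O).

(* dist(0, A) in the extended reals; dist(0, empty) = +oo *)
Definition dist0 (n : nat) (A : set 'rV[R]_n) : \bar R :=
  ereal_inf [set (enorm a)%:E | a in A].

Definition lin_open_const (n m : nat) (h : 'rV[R]_n -> 'rV[R]_m) (xbar : 'rV[R]_n)
  (alpha : R) :=
  0 < alpha /\
  exists (U : set 'rV[R]_n) (V : set 'rV[R]_m),
    nbhs xbar U /\ nbhs (h xbar) V /\
    forall x r, U x -> 0 < r ->
      forall y, enorm (y - h x) < alpha * r -> V y ->
        exists z, enorm (z - x) < r /\ h z = y.

Definition lin_open (n m : nat) (h : 'rV[R]_n -> 'rV[R]_m) (xbar : 'rV[R]_n) :=
  exists alpha, lin_open_const h xbar alpha.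

Definition lop (n m : nat) (h : 'rV[R]_n -> 'rV[R]_m) (xbar : 'rV[R]_n) : \bar R :=
  ereal_sup [set alpha%:E | alpha in lin_open_const h xbar].

End Defs.

(* Main.v *)
Require Import Defs.
From HB Require Import structures.
From mathcomp Require Import all_boot all_order all_algebra.
From mathcomp Require Import all_classical all_reals all_analysis.
From mathcomp Require Import ring lra.
Import Order.TTheory GRing.Theory Num.Theory.
Import numFieldNormedType.Exports.
Local Open Scope classical_set_scope.
Local Open Scope ring_scope.
Section A.
Local Set Implicit Arguments.
Variable R : realType.
Implicit Types (n : nat).

Lemma dotpC n (x y : 'rV[R]_n) : dotp x y = dotp y x.
Proof. by apply: eq_bigr => i _; rewrite mulrC. Qed.

Lemma dotpDr n (x y z : 'rV[R]_n) : dotp x (y + z) = dotp x y + dotp x z.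
Proof. by rewrite /dotp -big_split; apply: eq_bigr => i _; rewrite !mxE mulrDr. Qed.

Lemma dotpZr n (c : R) (x y : 'rV[R]_n) : dotp x (c *: y) = c * dotp x y.
Proof. by rewrite /dotp mulr_sumr; apply: eq_bigr => i _; rewrite !mxE mulrCA. Qed.

Lemma dotpNr n (x y : 'rV[R]_n) : dotp x (- y) = - dotp x y.
Proof. by rewrite -scaleN1r dotpZr mulN1r. Qed.

Lemma dotpBr n (x y z : 'rV[R]_n) : dotp x (y - z) = dotp x y - dotp x z.
Proof. by rewrite dotpDr dotpNr. Qed.

Lemma dotpDl n (x y z : 'rV[R]_n) : dotp (y + z) x = dotp y x + dotp z x.
Proof. by rewrite !(dotpC _ x) dotpDr. Qed.

Lemma dotpZl n (c : R) (x y : 'rV[R]_n) : dotp (c *: y) x = c * dotp y x.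
Proof. by rewrite !(dotpC _ x) dotpZr. Qed.

Lemma dotpNl n (x y : 'rV[R]_n) : dotp (- y) x = - dotp y x.
Proof. by rewrite !(dotpC _ x) dotpNr. Qed.

Lemma dotpBl n (x y z : 'rV[R]_n) : dotp (y - z) x = dotp y x - dotp z x.
Proof. by rewrite dotpDl dotpNl. Qed.

Lemma dotp0r n (x : 'rV[R]_n) : dotp x 0 = 0.
Proof. by rewrite /dotp big1 // => i _; rewrite mxE mulr0. Qed.

Lemma dotp0l n (x : 'rV[R]_n) : dotp 0 x = 0.
Proof. by rewrite dotpC dotp0r. Qed.

Lemma dotp_ge0 n (x : 'rV[R]_n) : 0 <= dotp x x.
Proof. by apply: sumr_ge0 => i _; rewrite -expr2 sqr_ge0. Qed.

Lemma enorm_ge0 n (x : 'rV[R]_n) : 0 <= enorm x.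
Proof. exact: sqrtr_ge0. Qed.

Lemma enorm_sq n (x : 'rV[R]_n) : enorm x ^+ 2 = dotp x x.
Proof. by rewrite /enorm sqr_sqrtr // dotp_ge0. Qed.

Lemma enormZ n (c : R) (x : 'rV[R]_n) : enorm (c *: x) = `|c| * enorm x.
Proof.
by rewrite /enorm dotpZl dotpZr mulrA -expr2 sqrtrM ?sqr_ge0 // sqrtr_sqr.
Qed.

Lemma enormN n (x : 'rV[R]_n) : enorm (- x) = enorm x.
Proof. by rewrite -scaleN1r enormZ normrN1 mul1r. Qed.

Lemma enormB n (x y : 'rV[R]_n) : enorm (x - y) = enorm (y - x).
Proof. by rewrite -enormN opprB. Qed.

Lemma enorm0 n : enorm (0 : 'rV[R]_n) = 0.
Proof. by rewrite /enorm dotp0r sqrtr0. Qed.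

Lemma CS2 n (x y : 'rV[R]_n) : dotp x y ^+ 2 <= dotp x x * dotp y y.
Proof.
set A := dotp x x; set B := dotp x y; set C := dotp y y.
have H t : 0 <= A + 2 * t * B + t ^+ 2 * C.
  have := dotp_ge0 (x + t *: y).
  rewrite !(dotpDl, dotpDr, dotpZl, dotpZr) -/A -/B -/C (dotpC y x) -/B.
  by congr (0 <= _); ring.
have C0 : 0 <= C by apply: dotp_ge0.
have [Cz|Cp] := eqVneq C 0.
  have [Bz|Bn] := eqVneq B 0.
    by rewrite Bz Cz expr0n /= mulr0.
  have := H (- (A + 1) / (2 * B)); rewrite Cz.
  have -> : A + 2 * (- (A + 1) / (2 * B)) * B + (- (A + 1) / (2 * B)) ^+ 2 * 0 = -1.
    by field.
  lra.
have Cpos : 0 < C by rewrite lt_def Cp C0.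
have := H (- B / C).
have -> : A + 2 * (- B / C) * B + (- B / C) ^+ 2 * C = A - B ^+ 2 / C.
  by field.
rewrite subr_ge0 ler_pdivrMr //.
Qed.

Lemma CS n (x y : 'rV[R]_n) : `|dotp x y| <= enorm x * enorm y.
Proof.
rewrite /enorm -sqrtrM ?dotp_ge0 // -sqrtr_sqr ler_sqrt ?CS2 //.
by rewrite mulr_ge0 ?dotp_ge0.
Qed.

Lemma enormD n (x y : 'rV[R]_n) : enorm (x + y) <= enorm x + enorm y.
Proof.
rewrite -(@ler_pXn2r _ 2) ?nnegrE ?addr_ge0 ?enorm_ge0 //.
rewrite enorm_sq !(dotpDl, dotpDr) (dotpC y x) sqrrD !enorm_sq.
have := CS x y; have := ler_norm (dotp x y); lra.
Qed.

Lemma enorm_tri n (x y z : 'rV[R]_n) : enorm (x - z) <= enorm (x - y) + enorm (y - z).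
Proof. by have := enormD (x - y) (y - z); rewrite addrA subrK. Qed.

Lemma coord_le_enorm n (x : 'rV[R]_n) i : `|x 0 i| <= enorm x.
Proof.
rewrite -sqrtr_sqr /enorm ler_sqrt ?dotp_ge0 // /dotp (bigD1 i) //= -expr2.
by rewrite lerDl sumr_ge0 // => j _; rewrite -expr2 sqr_ge0.
Qed.

End A.
Arguments dotpC {R n}.
Arguments dotpDr {R n}.
Arguments dotpZr {R n}.
Arguments dotpNr {R n}.
Arguments dotpBr {R n}.
Arguments dotpDl {R n}.
Arguments dotpZl {R n}.
Arguments dotpNl {R n}.
Arguments dotpBl {R n}.
Arguments dotp0r {R n}.
Arguments dotp0l {R n}.
Arguments dotp_ge0 {R n}.
Arguments enorm_ge0 {R n}.
Arguments enorm_sq {R n}.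
Arguments enormZ {R n}.
Arguments enormN {R n}.
Arguments enormB {R n}.
Arguments enorm0 {R n}.
Arguments CS2 {R n}.
Arguments CS {R n}.
Arguments enormD {R n}.
Arguments enorm_tri {R n}.
Arguments coord_le_enorm {R n}.


Section B.
Local Set Implicit Arguments.
Variable R : realType.

Lemma mxnorm_def n (x : 'rV[R]_n) : `|x| = \big[Num.max/0]_ij `|x ij.1 ij.2|.
Proof. by rewrite -mx_normrE. Qed.

Lemma coord_le_mxnorm n (x : 'rV[R]_n) i : `|x 0 i| <= `|x|.
Proof. by rewrite mxnorm_def; apply: (le_bigmax _ (fun ij => `|x ij.1 ij.2|) (0, i)). Qed.

Lemma mxnorm_le_enorm n (x : 'rV[R]_n) : `|x| <= enorm x.
Proof.
rewrite mxnorm_def; apply: bigmax_le; first exact: enorm_ge0.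
by move=> [i j] _ /=; rewrite ord1 coord_le_enorm.
Qed.

Lemma enorm_le_coord n (v : 'rV[R]_n) c :
  0 <= c -> (forall i, `|v 0 i| <= c) -> enorm v <= n.+1%:R * c.
Proof.
move=> c0 Hc; rewrite /enorm -(@ger0_norm _ (n.+1%:R * c)) ?mulr_ge0 //.
rewrite -sqrtr_sqr ler_sqrt ?sqr_ge0 //.
apply: (@le_trans _ _ (\sum_(i < n) c ^+ 2)).
  apply: ler_sum => i _; rewrite -expr2 -real_normK ?num_real //.
  by rewrite lerXn2r ?nnegrE ?normr_ge0.
rewrite sumr_const card_ord exprMn -(mulr_natr (c ^+ 2) n) (mulrC (c ^+ 2)).
apply: ler_wpM2r; first exact: sqr_ge0.
by rewrite -natrX ler_nat; apply: (@leq_trans n.+1) => //; rewrite expnS expn1 leq_pmulr.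
Qed.

Lemma enorm_le_mxnorm n (v : 'rV[R]_n) : enorm v <= n.+1%:R * `|v|.
Proof. by apply: enorm_le_coord => //; exact: coord_le_mxnorm. Qed.

Lemma lip_cont n (T : normedModType R) (f : 'rV[R]_n -> T) K :
  (forall a b, `|f a - f b| <= K * `|a - b|) -> continuous f.
Proof.
move=> Hf x; apply: (@cvgrPdist_lt _ _ _ _ (nbhs_filter x) f (f x)).2 => e e0.
have eK : 0 < e / (`|K| + 1) by rewrite divr_gt0 // ltr_wpDl.
have := nbhsx_ballx x _ eK; rewrite -ball_normE.
apply: filterS => y; rewrite /ball_ /= => Hy.
apply: (le_lt_trans (Hf x y)).
apply: (le_lt_trans (ler_wpM2r (normr_ge0 _) (ler_norm K))).
have H1 : (`|K| + 1) * `|x - y| < e.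
  by rewrite mulrC -ltr_pdivlMr // ltr_wpDl.
apply: le_lt_trans H1; apply: ler_wpM2r => //; rewrite lerDl //.
Qed.

Lemma enorm_cont n : continuous (@enorm R n).
Proof.
apply: (@lip_cont _ _ _ n.+1%:R) => a b.
apply: le_trans (enorm_le_mxnorm (a - b)).
rewrite ler_norml; have := enorm_tri a b 0; have := enorm_tri b a 0.
rewrite !subr0 (enormB b a); lra.
Qed.

End B.
Arguments mxnorm_def {R n}.
Arguments coord_le_mxnorm {R n}.
Arguments mxnorm_le_enorm {R n}.
Arguments enorm_le_coord {R n}.
Arguments enorm_le_mxnorm {R n}.
Arguments lip_cont {R n T}.
Arguments enorm_cont {R n}.

Section C.
Local Set Implicit Arguments.
Variable R : realType.

Lemma sub0 n (p : 'rV[R]_n -> R) : sublinear p -> p 0 = 0.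
Proof.
move=> [hom _]; have := hom 2 0 (ltr0Sn _ 1); rewrite scaler0 => H; lra.
Qed.

Lemma subD n (p : 'rV[R]_n -> R) x y : sublinear p -> p (x + y) <= p x + p y.
Proof.
move=> [hom cvx].
have h2 : (0 : R) < 2 by [].
have n2 : (2 : R) != 0 by rewrite pnatr_eq0.
have hl : (1 - 2^-1 : R) = 2^-1 by rewrite {1}(splitr 1) mul1r addrK.
have := cvx x y (2^-1); rewrite hl invr_ge0 ler0n invf_le1 ?ler1n // => /(_ isT isT) H.
have -> : x + y = 2 *: (2^-1 *: x + 2^-1 *: y).
  by rewrite scalerDr !scalerA divff // !scale1r.
rewrite hom //.
have -> : p x + p y = 2 * (2^-1 * p x + 2^-1 * p y).
  by rewrite mulrDr !mulrA divff // !mul1r.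
by rewrite ler_pM2l.
Qed.

Definition e_ {n} (i : 'I_n) : 'rV[R]_n := delta_mx 0 i.

Lemma subZ n (p : 'rV[R]_n -> R) (c : R) v : sublinear p ->
  p (c *: v) <= `|c| * (`|p v| + `|p (- v)|).
Proof.
move=> sp; have [hom _] := sp.
have Hn (a : R) : a <= `|a| by apply: ler_norm.
have [c0|c0|->] := ltgtP c 0.
- have -> : c *: v = (- c) *: (- v) by rewrite scaleNr scalerN opprK.
  rewrite hom ?oppr_gt0 // ltr0_norm //.
  apply: ler_wpM2l; first by rewrite oppr_ge0 ltW.
  by apply: le_trans (Hn _) _; rewrite lerDr.
- rewrite hom // gtr0_norm //.
  apply: ler_wpM2l; first by rewrite ltW.
  by apply: le_trans (Hn _) _; rewrite lerDl.
- by rewrite scale0r sub0 // normr0 mul0r.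
Qed.

Definition subK n (p : 'rV[R]_n -> R) : R :=
  \sum_(i < n) (`|p (e_ i)| + `|p (- e_ i)|).

Lemma subK_ge0 n (p : 'rV[R]_n -> R) : 0 <= subK p.
Proof. by apply: sumr_ge0 => i _; rewrite addr_ge0. Qed.

Lemma subbound n (p : 'rV[R]_n -> R) x : sublinear p -> p x <= subK p * enorm x.
Proof.
move=> sp; rewrite {1}(row_sum_delta x).
apply: (@le_trans _ _ (\sum_(i < n) `|x 0 i| * (`|p (e_ i)| + `|p (- e_ i)|))).
  apply: (big_ind2 (fun a b => p a <= b)).
  - by rewrite sub0.
  - by move=> a1 b1 a2 b2 H1 H2; apply: le_trans (subD _ _ sp) (lerD H1 H2).
  - by move=> i _; apply: subZ.
rewrite /subK mulr_suml; apply: ler_sum => i _.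
by rewrite mulrC ler_wpM2l ?addr_ge0 // coord_le_enorm.
Qed.

Lemma sublip n (p : 'rV[R]_n -> R) a b : sublinear p ->
  `|p a - p b| <= subK p * enorm (a - b).
Proof.
move=> sp; have H1 := subbound (a - b) sp; have H2 := subbound (b - a) sp.
have H3 := subD (a - b) b sp; have H4 := subD (b - a) a sp.
rewrite subrK in H3; rewrite subrK in H4; rewrite enormB in H2.
rewrite ler_norml; lra.
Qed.

Lemma dotp_e n (i : 'I_n) (v : 'rV[R]_n) : dotp (e_ i) v = v 0 i.
Proof.
rewrite /dotp (bigD1 i) //= big1 ?addr0; first by rewrite /e_ mxE !eqxx mul1r.
by move=> j ji; rewrite /e_ mxE (negbTE ji) andbF mul0r.
Qed.

Lemma h_lip n m (h : 'rV[R]_n -> 'rV[R]_m) :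
  (forall w, DCH (scal w h)) ->
  exists L, 0 <= L /\ forall a b, enorm (h a - h b) <= L * enorm (a - b).
Proof.
move=> Hd.
have Hi : forall i : 'I_m, exists K : R, 0 <= K /\
    forall a b, `|h a 0 i - h b 0 i| <= K * enorm (a - b).
  move=> i; have [P [Q [sP [sQ E]]]] := Hd (e_ i).
  exists (subK P + subK Q); split; first by rewrite addr_ge0 ?subK_ge0.
  move=> a b; have := E a; have := E b; rewrite /scal !dotp_e => -> ->.
  have := sublip a b sP; have := sublip a b sQ.
  have -> : P a - Q a - (P b - Q b) = (P a - P b) - (Q a - Q b) by ring.
  move=> h1 h2; apply: (le_trans (ler_normB _ _)); rewrite mulrDl; exact: lerD.
have [K HK] := fin_all_exists Hi.
exists (m.+1%:R * \sum_i K i); split.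
  by rewrite mulr_ge0 // sumr_ge0 // => i _; case: (HK i).
move=> a b; rewrite -mulrA; apply: enorm_le_coord.
  by rewrite mulr_ge0 ?enorm_ge0 // sumr_ge0 // => i _; case: (HK i).
move=> i; rewrite !mxE; case: (HK i) => _ /(_ a b) H; apply: le_trans H _.
apply: ler_wpM2r; first exact: enorm_ge0.
rewrite (bigD1 i) //= lerDl sumr_ge0 // => j _; by case: (HK j).
Qed.

End C.
Arguments sub0 {R n}.
Arguments subD {R n}.
Arguments subZ {R n}.
Arguments subK_ge0 {R n}.
Arguments subbound {R n}.
Arguments sublip {R n}.
Arguments dotp_e {R n}.
Arguments h_lip {R n m}.
Arguments e_ {R n}.


Section D.
Local Set Implicit Arguments.
Variable R : realType.

Lemma lim_ineq (F : R -> R) d c K t0 :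
  F t @[t --> (0:R)^'+] --> d -> 0 < t0 ->
  (forall t, 0 < t -> t < t0 -> 0 <= F t + t * K + c) -> 0 <= d + c.
Proof.
move=> Fd t00 H.
have G : (fun t => F t + t * K + c) @ (0:R)^'+ --> d + 0 * K + c.
  apply: cvgD; last exact: cvg_cst.
  apply: cvgD => //; apply: cvgMl.
  by apply: cvg_at_right_filter; exact: cvg_id.
rewrite mul0r addr0 in G.
apply: (cvgr_to_ge G).
near=> t; apply: H; first by near: t; exact: nbhs_right_gt.
by near: t; exact: nbhs_right_lt.
Unshelve. all: end_near.
Qed.

Lemma sqrt_conc (X Y : R) : 0 <= X -> 0 < Y -> X - Y <= (X ^+ 2 - Y ^+ 2) / (2 * Y).
Proof.
move=> X0 Y0; rewrite ler_pdivlMr ?mulr_gt0 //.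
have : 0 <= (X - Y) ^+ 2 by apply: sqr_ge0.
nra.
Qed.


Lemma le_eq (x y : R) : x = y -> x <= y.
Proof. by move->. Qed.

Lemma dot_expand n (a d : 'rV[R]_n) :
  dotp (a + d) (a + d) = dotp a a + 2 * dotp a d + dotp d d.
Proof. by rewrite !(dotpDl, dotpDr) (dotpC d a); ring. Qed.

Lemma key n m (h : 'rV[R]_n -> 'rV[R]_m) (L : R) (zb x : 'rV[R]_n) (y : 'rV[R]_m)
  (beta eta rho : R) p q :
  0 <= L -> (forall a b, enorm (h a - h b) <= L * enorm (a - b)) ->
  0 < beta -> 0 < eta -> enorm (zb - x) < rho ->
  (forall z, enorm (z - x) <= rho ->
     enorm (h zb - y) + beta * Num.sqrt (enorm (zb - x) ^+ 2 + eta ^+ 2) <=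
     enorm (h z - y) + beta * Num.sqrt (enorm (z - x) ^+ 2 + eta ^+ 2)) ->
  0 < enorm (h zb - y) ->
  qd_pair h zb ((enorm (h zb - y))^-1 *: (h zb - y)) p q ->
  forall v, 0 <= p v - q v +
     beta * (dotp (zb - x) v / Num.sqrt (enorm (zb - x) ^+ 2 + eta ^+ 2)).
Proof.
move=> L0 HL b0 e0 zbx Hmin A0 [_ [_ Hd]] v.
set a := h zb - y; set A := enorm a; set w := A^-1 *: a.
set u := zb - x; set S := Num.sqrt (enorm u ^+ 2 + eta ^+ 2).
have S0 : 0 < S by rewrite sqrtr_gt0 ltr_wpDl ?sqr_ge0 ?exprn_gt0.
have hS : S ^+ 2 = enorm u ^+ 2 + eta ^+ 2 by rewrite sqr_sqrtr // addr_ge0 ?sqr_ge0.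
set K := L ^+ 2 * enorm v ^+ 2 / (2 * A) + beta * (enorm v ^+ 2 / (2 * S)).
have u0 : 0 < rho - enorm u by rewrite subr_gt0.
have v1 : 0 < enorm v + 1 by rewrite ltr_wpDl ?enorm_ge0.
apply: (@lim_ineq _ _ _ K ((rho - enorm u) / (enorm v + 1)) (Hd v)).
  by rewrite divr_gt0.
move=> t t0 tt0.
set z := zb + t *: v.
have Bz : enorm (z - x) <= rho.
  have -> : z - x = u + t *: v by rewrite /z /u addrAC.
  apply: (le_trans (enormD _ _)); rewrite enormZ gtr0_norm //.
  rewrite ltr_pdivlMr // in tt0.
  have : t * enorm v <= t * (enorm v + 1) by apply: ler_wpM2l; [exact: ltW | rewrite lerDl].
  lra.
have Hm := Hmin z Bz.
set D := dotp w (h z) - dotp w (h zb).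
set Dl := h z - h zb.
have eD : D = dotp w Dl by rewrite /Dl dotpBr.
have ea : h z - y = a + Dl by rewrite /a /Dl [RHS]addrC addrA subrK.
have An : A != 0 by rewrite gt_eqF.
have aD : dotp a Dl = A * D by rewrite eD /w dotpZl mulrA divff // mul1r.
have h1 : enorm (h z - y) - A <= D + dotp Dl Dl / (2 * A).
  apply: le_trans (sqrt_conc _ _ (enorm_ge0 _) A0) _.
  rewrite !enorm_sq ea dot_expand aD /A /a.
  apply: le_eq; field; by rewrite gt_eqF.
have h2 : dotp Dl Dl / (2 * A) <= t ^+ 2 * (L ^+ 2 * enorm v ^+ 2 / (2 * A)).
  rewrite mulrA; apply: ler_wpM2r; first by rewrite invr_ge0 mulr_ge0 ?ltW.
  have hv : 0 <= t * (L * enorm v) by rewrite !mulr_ge0 ?enorm_ge0 // ltW.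
  rewrite -enorm_sq -!exprMn lerXn2r ?nnegrE ?enorm_ge0 //.
  apply: le_trans (HL _ _) _; rewrite /z addrAC subrr add0r enormZ gtr0_norm //.
  by rewrite mulrCA.
have h3 : Num.sqrt (enorm (z - x) ^+ 2 + eta ^+ 2) - S <=
    t * (dotp u v / S) + t ^+ 2 * (enorm v ^+ 2 / (2 * S)).
  apply: le_trans (sqrt_conc _ _ (sqrtr_ge0 _) S0) _.
  rewrite sqr_sqrtr ?addr_ge0 ?sqr_ge0 // hS.
  have -> : z - x = u + t *: v by rewrite /z /u addrAC.
  rewrite !enorm_sq dot_expand !(dotpZl, dotpZr).
  apply: le_eq; field; by rewrite gt_eqF.
have h4 : beta * (Num.sqrt (enorm (z - x) ^+ 2 + eta ^+ 2) - S) <=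
    beta * (t * (dotp u v / S) + t ^+ 2 * (enorm v ^+ 2 / (2 * S))).
  by apply: ler_wpM2l; [exact: ltW|].
have h5 : 0 <= D + t ^+ 2 * K + t * (beta * (dotp u v / S)).
  rewrite /K; move: Hm; rewrite -/a -/A -/u -/S => Hm.
  rewrite mulrDl in h4; rewrite mulrBr in h4; nra.
have -> : D / t + t * K + beta * (dotp u v / S)
   = (D + t ^+ 2 * K + t * (beta * (dotp u v / S))) / t.
  have tn : t != 0 by rewrite gt_eqF.
  move: tn; generalize D K S t (dotp u v) beta => D1 K1 S1 t1 du bb tn. rewrite !mulrDl; congr (_ + _ + _); first by rewrite mulrAC expr2 mulfK.
  by rewrite mulrAC divff // mul1r.
by rewrite divr_ge0 // ltW.
Qed.

End D.
Arguments lim_ineq {R}.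
Arguments sqrt_conc {R}.
Arguments le_eq {R}.
Arguments dot_expand {R}.
Arguments key {R}.


Section E.
Local Set Implicit Arguments.
Variable R : realType.

Lemma stard n (p q : 'rV[R]_n -> R) G : sublinear p -> sublinear q ->
  (forall v, 0 <= p v - q v + dotp G v) -> stardiff (subdiff p 0) (subdiff q 0) (- G).
Proof.
move=> sp sq H b Hb y; move: (Hb y); rewrite /subdiff /= !sub0 // subr0 !add0r.
rewrite dotpDl dotpNl; have := H y; lra.
Qed.

Lemma enorm_eq0 n (a : 'rV[R]_n) : enorm a = 0 -> a = 0.
Proof.
move=> /eqP; rewrite /enorm sqrtr_eq0 => H.
have H0 : dotp a a = 0 by apply/eqP; rewrite eq_le H dotp_ge0.
apply/rowP => i; rewrite mxE.
have nn : forall j : 'I_n, true -> 0 <= a 0 j * a 0 j by move=> j _; rewrite -expr2 sqr_ge0.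
have := psumr_eq0P nn H0 (i := i) isT.
by rewrite -expr2 => /eqP; rewrite sqrf_eq0 => /eqP.
Qed.

Lemma enorm_nbhs n (c : 'rV[R]_n) e : 0 < e -> nbhs c [set x | enorm (x - c) < e].
Proof.
move=> e0; apply/nbhs_ballP; exists (e / n.+1%:R); first by rewrite /= divr_gt0.
move=> x; rewrite -ball_normE /ball_ /= distrC => H.
apply: (le_lt_trans (enorm_le_mxnorm _)).
by rewrite mulrC -ltr_pdivlMr.
Qed.

Lemma nbhs_enorm n (U : set 'rV[R]_n) : nbhs (0 : 'rV[R]_n) U ->
  exists2 e, 0 < e & forall z, enorm z < e -> U z.
Proof.
move=> /nbhs_ballP [e e0 He]; exists e => // z Hz; apply: He.
rewrite -ball_normE /ball_ /= sub0r normrN.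
exact: le_lt_trans (mxnorm_le_enorm _) Hz.
Qed.

Lemma rev_tri n (a b c : 'rV[R]_n) : `|enorm (a - c) - enorm (b - c)| <= enorm (a - b).
Proof.
rewrite ler_norml; have := enorm_tri a b c; have := enorm_tri b a c.
rewrite (enormB b a); lra.
Qed.

Lemma cont_shift n (c : 'rV[R]_n) : continuous (fun z : 'rV[R]_n => enorm (z - c)).
Proof.
apply: (lip_cont _ n.+1%:R) => a b.
by apply: le_trans (rev_tri a b c) (enorm_le_mxnorm _).
Qed.

Lemma sqrt_lip (X Y e : R) : 0 <= X -> 0 <= Y -> 0 < e ->
  `|Num.sqrt (X ^+ 2 + e ^+ 2) - Num.sqrt (Y ^+ 2 + e ^+ 2)| <= `|X - Y|.
Proof.
move=> X0 Y0 e0.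
have p0 a : 0 < a ^+ 2 + e ^+ 2 by rewrite ltr_wpDl ?sqr_ge0 ?exprn_gt0.
set SX := Num.sqrt _; set SY := Num.sqrt _.
have SX0 : 0 < SX by rewrite sqrtr_gt0.
have SY0 : 0 < SY by rewrite sqrtr_gt0.
have hX : SX ^+ 2 = X ^+ 2 + e ^+ 2 by rewrite sqr_sqrtr // ltW.
have hY : SY ^+ 2 = Y ^+ 2 + e ^+ 2 by rewrite sqr_sqrtr // ltW.
have gX : X <= SX.
  have eX : Num.sqrt (X ^+ 2) = X by rewrite sqrtr_sqr ger0_norm.
  by rewrite -{1}eX /SX ler_sqrt ?lerDl ?sqr_ge0 // ltW.
have gY : Y <= SY.
  have eY : Num.sqrt (Y ^+ 2) = Y by rewrite sqrtr_sqr ger0_norm.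
  by rewrite -{1}eY /SY ler_sqrt ?lerDl ?sqr_ge0 // ltW.
have E : (SX - SY) * (SX + SY) = (X - Y) * (X + Y).
  have : SX ^+ 2 - SY ^+ 2 = X ^+ 2 - Y ^+ 2 by rewrite hX hY; ring.
  by rewrite !subr_sqr mulrC => ->; rewrite mulrC.
have S0 : 0 < SX + SY by rewrite addr_gt0.
have E2 : `|SX - SY| * (SX + SY) = `|X - Y| * (X + Y).
  by rewrite -{1}(gtr0_norm S0) -normrM E normrM (ger0_norm (addr_ge0 X0 Y0)).
have : `|SX - SY| * (SX + SY) <= `|X - Y| * (SX + SY).
  by rewrite E2; apply: ler_wpM2l => //; rewrite lerD.
by rewrite ler_pM2r.
Qed.

End E.
Arguments stard {R}.
Arguments enorm_eq0 {R}.
Arguments enorm_nbhs {R}.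
Arguments nbhs_enorm {R}.
Arguments rev_tri {R}.
Arguments cont_shift {R}.
Arguments sqrt_lip {R}.


Lemma ereal_lb (R : realType) (Dv Lv : \bar R) : (0 < Dv)%E ->
  (forall t : R, 0 < t -> (t%:E < Dv)%E -> (t%:E <= Lv)%E) -> (Dv <= Lv)%E.
Proof.
case: Dv => [r| |] //= D0 H.
- rewrite lte_fin in D0; case: Lv H => [l| |] H //=.
  + rewrite lee_fin leNgt; apply/negP => lr.
    have [l0|l0] := ltP l 0.
    * have := H (r / 2); rewrite lte_fin lee_fin.
      have r2 : r / 2 < r by rewrite ltr_pdivrMr //; lra.
      have r20 : 0 < r / 2 by rewrite divr_gt0.
      move=> /(_ r20 r2); lra.
    * have := H ((l + r) / 2); rewrite lte_fin lee_fin.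
      have t0 : 0 < (l + r) / 2 by rewrite divr_gt0 //; lra.
      have t1 : (l + r) / 2 < r by rewrite ltr_pdivrMr //; lra.
      move=> /(_ t0 t1); rewrite ler_pdivrMr //; lra.
  + by rewrite leey.
  + have r20 : 0 < r / 2 by rewrite divr_gt0.
    have r2 : r / 2 < r by rewrite ltr_pdivrMr //; lra.
    by have := H (r / 2) r20; rewrite lte_fin => /(_ r2); rewrite leeNy_eq.
- case: Lv H => [l| |] H //=.
  + have t0 : 0 < `|l| + 1 by rewrite ltr_wpDl.
    have := H _ t0 (ltry _); rewrite lee_fin => H1; exfalso; have := ler_norm l; lra.
  + by have := H 1 ltr01 (ltry _); rewrite leeNy_eq.
Qed.


Lemma lem_main (R : realType) n m (h : 'rV[R]_n -> 'rV[R]_m) (U0 : set 'rV[R]_n)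
  (L : R) (D : \bar R) (alpha : R) :
  h 0 = 0 -> 0 <= L -> (forall a b, enorm (h a - h b) <= L * enorm (a - b)) ->
  nbhs (0 : 'rV[R]_n) U0 -> (forall x, U0 x -> scal_quasidiff h x) ->
  (forall O : set 'rV[R]_n, open O -> Dstar_set h 0 (@sphere R m) `<=` O ->
     exists2 delta : R, 0 < delta &
       forall x, enorm (x - 0) <= delta -> Dstar_set h x (@sphere R m) `<=` O) ->
  D = dist0 (Dstar_set h 0 (@sphere R m)) -> (0 < D)%E ->
  0 < alpha -> (alpha%:E < D)%E -> lin_open_const h 0 alpha.
Proof.
move=> h0 L0 HL hU0 HU0 HC ED Hd a0 aD.
have [beta [aβ βD]] : exists beta, alpha < beta /\ (beta%:E < D)%E.
  case E: D aD Hd => [r| |] aD Hd0 //.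
  - rewrite lte_fin in aD; exists ((alpha + r) / 2); split.
      by rewrite ltr_pdivlMr //; lra.
    by rewrite lte_fin ltr_pdivrMr //; lra.
  - by exists (alpha + 1); split; [lra | rewrite ltry].
have b0 : 0 < beta by lra.
set O := [set s : 'rV[R]_n | beta < enorm s].
have Oopen : open O.
  have -> : O = (@enorm R n) @^-1` [set r | beta < r] by [].
  apply: open_comp; last exact: open_gt.
  by move=> z _; exact: enorm_cont.
have DO : Dstar_set h 0 (@sphere R m) `<=` O.
  move=> s Ds; rewrite /O /=.
  have : (D <= (enorm s)%:E)%E by rewrite ED; apply: ereal_inf_lbound; exists s.
  move=> H; have := lt_le_trans βD H; by rewrite lte_fin.
have [delta d0 Hdelta] := HC O Oopen DO.
have [e0 e00 He0] := nbhs_enorm _ _ hU0.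
set R0 := Num.min delta (e0 / 2).
have R00 : 0 < R0 by rewrite lt_min d0 divr_gt0.
have R0d : R0 <= delta by rewrite ge_min lexx.
have R0e : R0 < e0.
  by apply: (le_lt_trans (y := e0 / 2)); [rewrite ge_min lexx orbT | rewrite ltr_pdivrMr //; lra].
set rho1 := R0 / 2.
have r10 : 0 < rho1 by rewrite divr_gt0.
have r1R : rho1 + rho1 = R0 by rewrite /rho1 -splitr.
set eps1 := Num.min rho1 (alpha * rho1 / (2 * (L + 1))).
have L1 : 0 < L + 1 by lra.
have eps10 : 0 < eps1 by rewrite lt_min r10 !divr_gt0 ?mulr_gt0.
have eps1a : eps1 <= rho1 by rewrite ge_min lexx.
have eps1b : L * eps1 <= alpha * rho1 / 2.
  have : eps1 <= alpha * rho1 / (2 * (L + 1)) by rewrite ge_min lexx orbT.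
  move=> H; apply: (le_trans (ler_wpM2l L0 H)).
  have -> : L * (alpha * rho1 / (2 * (L + 1))) = (alpha * rho1 / 2) * (L / (L + 1)).
    by field; rewrite gt_eqF.
  rewrite -[X in _ <= X]mulr1; apply: ler_wpM2l.
    by rewrite divr_ge0 // mulr_ge0 // ltW.
  by rewrite ler_pdivrMr //; lra.
set eps2 := alpha * rho1 / 2.
have eps20 : 0 < eps2 by rewrite divr_gt0 // mulr_gt0.
split => //.
exists [set x | enorm (x - 0) < eps1], [set y | enorm (y - h 0) < eps2].
split; first exact: enorm_nbhs.
split; first exact: enorm_nbhs.
move=> x r Ux r0 y Hy Vy; rewrite /= subr0 in Ux; rewrite /= h0 subr0 in Vy.
set N := enorm (h x - y).
have NN : N = enorm (y - h x) by rewrite /N enormB.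
have hxb : enorm (h x) <= L * enorm x.
  by have := HL x 0; rewrite h0 !subr0.
have N1 : N < alpha * rho1.
  have := enorm_tri (h x) 0 y; rewrite subr0 sub0r enormN -/N => H.
  have : L * enorm x <= L * eps1 by rewrite ler_wpM2l // ltW.
  rewrite /eps2 in Vy; lra.
set rho := Num.min r rho1.
have rho0 : 0 < rho by rewrite lt_min r0 r10.
have rhor : rho <= r by rewrite ge_min lexx.
have rhor1 : rho <= rho1 by rewrite ge_min lexx orbT.
have Nrho : N < alpha * rho.
  rewrite /rho; have [H|H] := leP r rho1.
    by rewrite NN.
  by [].
have bN : N < beta * rho.
  apply: (lt_le_trans Nrho); rewrite ler_pM2r //; exact: ltW.
set eta := (beta * rho - N) / (2 * beta).
have eta0 : 0 < eta by rewrite divr_gt0 ?subr_gt0 // mulr_gt0.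
have beta_eta : beta * eta = (beta * rho - N) / 2.
  by rewrite /eta; field; rewrite gt_eqF.
set psi := fun z => enorm (h z - y) + beta * Num.sqrt (enorm (z - x) ^+ 2 + eta ^+ 2).
set B := [set z : 'rV[R]_n | enorm (z - x) <= rho].
have B0 : B !=set0 by exists x; rewrite /B /= subrr enorm0 ltW.
have Bc : compact B.
  apply: bounded_closed_compact.
    exists (enorm x + rho); split; first exact: num_real.
    move=> M HM z Bz /=.
    apply: (le_trans (mxnorm_le_enorm _)).
    have := enorm_tri z x 0; rewrite !subr0 => H.
    rewrite /B /= in Bz; lra.
  have -> : B = (fun z => enorm (z - x)) @^-1` [set r | r <= rho] by [].
  apply: preimage_closed; last exact: closed_le.
  by move=> z _; exact: cont_shift.
have psic : continuous psi.
  apply: (lip_cont _ ((L + beta) * n.+1%:R)) => a b.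
  rewrite -mulrA; apply: (le_trans _ (ler_wpM2l _ (enorm_le_mxnorm (a - b)))); last first.
    by rewrite addr_ge0 // ltW.
  rewrite /psi.
  have E1 : enorm (h a - y) + beta * Num.sqrt (enorm (a - x) ^+ 2 + eta ^+ 2)
    - (enorm (h b - y) + beta * Num.sqrt (enorm (b - x) ^+ 2 + eta ^+ 2)) =
    (enorm (h a - y) - enorm (h b - y)) + beta * (Num.sqrt (enorm (a - x) ^+ 2 + eta ^+ 2)
       - Num.sqrt (enorm (b - x) ^+ 2 + eta ^+ 2)) by ring.
  rewrite E1; apply: (le_trans (ler_normD _ _)).
  rewrite normrM (gtr0_norm b0) mulrDl.
  apply: lerD.
    by apply: (le_trans (rev_tri _ (h a) (h b) y)); apply: HL.
  apply: ler_wpM2l; first exact: ltW.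
  apply: (le_trans (sqrt_lip _ _ _ (enorm_ge0 _) (enorm_ge0 _) eta0)).
  exact: rev_tri.
have [zb Bzb Hmin] := EVT_min_rV B0 Bc (continuous_subspaceT psic).
rewrite inE /B /= in Bzb.
have Hmin' : forall z, enorm (z - x) <= rho -> psi zb <= psi z.
  by move=> z Hz; apply: Hmin; rewrite inE.
have psix : psi x = N + beta * eta.
  by rewrite /psi subrr enorm0 expr0n add0r sqrtr_sqr gtr0_norm.
set u := zb - x.
set S := Num.sqrt (enorm u ^+ 2 + eta ^+ 2).
have uS : enorm u < S.
  rewrite /S -{1}(ger0_norm (enorm_ge0 u)) -sqrtr_sqr ltr_sqrt ?ltr_pwDr ?exprn_gt0 //.
  exact: sqr_ge0.
have zbx : enorm u < rho.
  have := Hmin' x; rewrite subrr enorm0 => /(_ (ltW rho0)); rewrite psix /psi -/u -/S => H.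
  have H2 : beta * enorm u <= beta * S by rewrite ler_pM2l // ltW.
  have H3 : 0 <= enorm (h zb - y) by apply: enorm_ge0.
  rewrite -(ltr_pM2l b0); lra.
exists zb; split; first by apply: lt_le_trans zbx rhor.
case: (eqVneq (h zb) y) => // Hne; exfalso.
have A0 : 0 < enorm (h zb - y).
  rewrite lt_def enorm_ge0 andbT; apply/eqP => /enorm_eq0 /eqP.
  by rewrite subr_eq0 (negbTE Hne).
have zbs : enorm zb < R0.
  have := enorm_tri zb x 0; rewrite !subr0 -/u => H; lra.
have [p [q qp]] := HU0 zb (He0 _ (lt_trans zbs R0e)) ((enorm (h zb - y))^-1 *: (h zb - y)).
have K := key _ _ _ _ _ _ _ _ _ _ _ _ L0 HL b0 eta0 zbx Hmin' A0 qp.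
have [sp [sq _]] := qp.
set G := (beta / S) *: u.
have SD' : stardiff (subdiff p 0) (subdiff q 0) (- G).
  apply: stard => // v; rewrite /G dotpZl -/u -/S.
  by have := K v; rewrite mulrAC mulrA.
have Ds : Dstar_set h zb (@sphere R m) (- G).
  exists ((enorm (h zb - y))^-1 *: (h zb - y)).
    by rewrite /sphere /= enormZ ger0_norm ?invr_ge0 ?enorm_ge0 // mulVf ?gt_eqF.
  by exists p, q.
have := Hdelta zb _ (- G) Ds; rewrite subr0 => /(_ (ltW (lt_le_trans zbs R0d))).
rewrite /O /= enormN /G enormZ ger0_norm ?divr_ge0 ?ltW //; last by rewrite (le_lt_trans _ uS) ?enorm_ge0.
rewrite mulrAC ltr_pdivlMr ?(le_lt_trans _ uS) ?enorm_ge0 //.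
rewrite ltr_pM2l //; lra.
Qed.

Theorem mainTheorem8 (R : realType) (n m : nat) (h : 'rV[R]_n -> 'rV[R]_m) :
  pos_homogeneous h ->
  (forall w : 'rV[R]_m, DCH (scal w h)) ->
  condC h 0 ->
  (0 < dist0 (Dstar_set h 0 (@sphere R m)))%E ->
  lin_open h 0 /\ (dist0 (Dstar_set h 0 (@sphere R m)) <= lop h 0)%E.
Proof.
move=> hom DC [[U0 [hU0 HU0]] HC] Hd.
move: Hd; set D := dist0 _ => Hd.
have h0 : h 0 = 0.
  have := hom 2 0 (ltr0Sn _ 1); rewrite scaler0 => H.
  have : (2 - 1 : R) *: h 0 = 0 by rewrite scalerBl scale1r -H subrr.
  have -> : (2 - 1 : R) = 1 by lra.
  by rewrite scale1r.
have [L [L0 HL]] := h_lip h DC.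
have lem : forall alpha, 0 < alpha -> (alpha%:E < D)%E -> lin_open_const h 0 alpha.
  by move=> alpha; exact: (lem_main _ _ _ _ _ _ _ alpha h0 L0 HL hU0 HU0 HC erefl Hd).
split.
- case E: D Hd => [r| |] Hd0 //.
  + rewrite lte_fin in Hd0; exists (r / 2); apply: lem; first by rewrite divr_gt0.
    by rewrite E lte_fin ltr_pdivrMr //; lra.
  + by exists 1; apply: lem => //; rewrite E ltry.
- apply: ereal_lb => // t t0 tD.
  by apply: ereal_sup_ubound; exists t => //; apply: lem.
Qed.
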